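(* Let $X\subset\mathbb C^s$ be a finite nonempty set and let $A\subset\Gamma=\mathbb N_0^s$ be a finite set such that $\Pi_A$ is a degree reducing interpolation space for $X$. Let $L_A:\Pi\to\Pi_A$ be the interpolation operator, i.e. $L_Ap$ is the unique element of $\Pi_A$ with $(L_Ap)(x)=p(x)$ for all $x\in X$. Then the polynomials \[ q_\alpha(x):=x^\alpha-(L_A(\cdot)^\alpha)(x),\qquad \alpha\in\partial A, \] form an H-basis of the ideal $I_X=\{p\in\Pi:p(x)=0\ \forall x\in X\}$.
   Context: $\Pi=\mathbb C[x_1,\dots,x_s]$, $\deg$ is total degree with $\deg 0<0$. For $A\subset\Gamma$, $\Pi_A$ is the span of $x^\alpha$, $\alpha\in A$. A subspace $\mathcal P\subseteq\Pi$ is a degree reducing interpolation space for $X$ if for every $q\in\Pi$ there is exactly one $p\in\mathcal P$ with $p(x)=q(x)$ for all $x\in X$, and this $p$ satisfies $\deg p\le\deg q$. The border of a finite $A\subset\Gamma$ is $\partial A=\big(\bigcup_{j=1}^s(A+\epsilon_j)\big)\setminus A$, where $\epsilon_j$ is the $j$-th unit multiindex. A finite set $H\subset I$ of an ideal $I\subseteq\Pi$ is an H-basis of $I$ if every $q\in I$ can be written as $q=\sum_{h\in H}g_h h$ with $g_h\in\Pi$ and $\deg g_h+\deg h\le\deg q$ for all $h$ (terms with $g_h=0$ being allowed). *)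

(* Defs.v *)
From mathcomp Require Import all_boot all_algebra.
From mathcomp Require Import reals.
From mathcomp.real_closed Require Import complex.
From mathcomp Require Import finmap mpoly.
Set Implicit Arguments. Unset Strict Implicit. Unset Printing Implicit Defensive.
Import GRing.Theory.
Local Open Scope ring_scope.

(* total degree, with deg 0 = -1 < 0 *)
Definition deg (F : ringType) (s : nat) (p : {mpoly F[s]}) : int :=
  (msize p)%:Z - 1.

Definition evalpt (F : comRingType) (s : nat) (p : {mpoly F[s]}) (x : 'rV[F]_s) : F :=
  p.@[fun i => x ord0 i].

(* Pi_A = span of the monomials x^alpha, alpha in A *)
Definition inPi (F : ringType) (s : nat) (A : {fset 'X_{1..s}}) (p : {mpoly F[s]}) : Prop :=
  forall m, m \in msupp p -> m \in A.

Definition deg_red_interp_space (F : comRingType) (s : nat)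
  (A : {fset 'X_{1..s}}) (X : seq 'rV[F]_s) : Prop :=
  forall q : {mpoly F[s]},
    exists p : {mpoly F[s]},
      [/\ inPi A p, (forall x, x \in X -> evalpt p x = evalpt q x),
          (forall p', inPi A p' -> (forall x, x \in X -> evalpt p' x = evalpt q x) -> p' = p)
        & deg p <= deg q].

Definition border (s : nat) (A : {fset 'X_{1..s}}) : {fset 'X_{1..s}} :=
  ([fset (m + U_(j))%MM | m in A, j in 'I_s] `\` A)%fset.

Definition vanishing_ideal (F : comRingType) (s : nat) (X : seq 'rV[F]_s)
  (p : {mpoly F[s]}) : Prop :=
  forall x, x \in X -> evalpt p x = 0.

Definition is_Hbasis (F : ringType) (s : nat) (I : {mpoly F[s]} -> Prop)
  (H : seq {mpoly F[s]}) : Prop :=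
  (forall h, h \in H -> I h) /\
  forall q, I q ->
    exists g : {mpoly F[s]} -> {mpoly F[s]},
      q = \sum_(h <- undup H) g h * h /\
      forall h, h \in H -> g h != 0 -> deg (g h) + deg h <= deg q.

(* Main.v *)
Require Import Defs.
From mathcomp Require Import all_boot all_algebra.
From mathcomp Require Import reals.
From mathcomp.real_closed Require Import complex.
From mathcomp Require Import finmap mpoly.
From mathcomp Require Import zify ring.
Set Implicit Arguments. Unset Strict Implicit.
Import GRing.Theory.
Local Open Scope ring_scope.
Section H.
Context (F : idomainType) (s : nat).
Implicit Types p q : {mpoly F[s]}.

Lemma msize_le_sup p k : (forall m, m \in msupp p -> (mdeg m < k)%N) -> (msize p <= k)%N.
Proof. by move=> H; rewrite msizeE; apply/bigmax_leqP_seq => m /H. Qed.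

Lemma msizeD_le' p q : (msize (p+q) <= maxn (msize p) (msize q))%N.
Proof.
apply: msize_le_sup => m /msuppD_le; rewrite mem_cat => /orP[]/msize_mdeg_lt;
by rewrite leq_max => ->; rewrite ?orbT.
Qed.

Lemma degD_cases p q : deg (p + q) <= deg p \/ deg (p + q) <= deg q.
Proof.
rewrite /deg; have := msizeD_le' p q; rewrite leq_max => /orP[h|h]; [left|right]; lia.
Qed.

Definition Sn (H : seq {mpoly F[s]}) (n : int) p :=
  exists g : {mpoly F[s]} -> {mpoly F[s]}, p = \sum_(h <- undup H) g h * h /\
    forall h, h \in H -> g h != 0 -> deg (g h) + deg h <= n.

Lemma Sn0 H n : Sn H n 0.
Proof. by exists (fun _ => 0); split => [|h _]; rewrite ?eqxx // big1 // => h _; rewrite mul0r. Qed.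

Lemma SnD H n p q : Sn H n p -> Sn H n q -> Sn H n (p + q).
Proof.
move=> [g [-> Hg]] [g' [-> Hg']]; exists (fun h => g h + g' h); split.
  by rewrite -big_split /=; apply: eq_bigr => h _; rewrite mulrDl.
move=> h hH; have [g0|gn0] := eqVneq (g h) 0.
  by rewrite g0 add0r; apply: Hg'.
have [g0|gn0'] := eqVneq (g' h) 0.
  by rewrite g0 addr0 => _; apply: Hg.
move=> _; have := Hg h hH gn0; have := Hg' h hH gn0'.
case: (degD_cases (g h) (g' h)) => ?; lia.
Qed.

Lemma Snsum H n (I : Type) (r : seq I) (P : pred I) (G : I -> {mpoly F[s]}) :
  (forall i, P i -> Sn H n (G i)) -> Sn H n (\sum_(i <- r | P i) G i).
Proof. by move=> hG; apply: big_ind => //; [apply: Sn0| apply: SnD]. Qed.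

Lemma Sn_le H n n' p : n <= n' -> Sn H n p -> Sn H n' p.
Proof. move=> le [g [-> Hg]]; exists g; split => // h hH gn; have := Hg h hH gn; lia. Qed.

Lemma degM_le p q : p != 0 -> q != 0 -> deg (p * q) = deg p + deg q.
Proof.
move=> pn qn; rewrite /deg msizeM //.
have : (0 < msize p)%N by rewrite lt0n msize_poly_eq0.
have : (0 < msize q)%N by rewrite lt0n msize_poly_eq0.
lia.
Qed.

Lemma SnM H n d m p : deg m <= d -> Sn H n p -> Sn H (n + d) (m * p).
Proof.
move=> dm [g [-> Hg]]; exists (fun h => m * g h); split.
  by rewrite mulr_sumr; apply: eq_bigr => h _; rewrite mulrA.
move=> h hH; rewrite mulf_eq0 negb_or => /andP[mn gn].
rewrite degM_le //; have := Hg h hH gn; lia.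
Qed.

Lemma Sn_base H n h : h \in H -> deg h <= n -> Sn H n h.
Proof.
move=> hH dh; exists (fun k => if k == h then 1 else 0); split.
  rewrite (bigD1_seq h) ?mem_undup ?undup_uniq //= eqxx mul1r big1 ?addr0 //.
  by move=> k /negbTE ->; rewrite mul0r.
move=> k _; case: ifP => [/eqP ->|_]; last by rewrite eqxx.
by move=> _; move: dh; rewrite /deg msize1; lia.
Qed.

Lemma SnZ H n c p : Sn H n p -> Sn H n (c *: p).
Proof.
move=> hp; rewrite -mul_mpolyC; have := @SnM H n 0 (c%:MP) p; rewrite addr0; apply => //.
rewrite /deg msizeC; case: (c != 0); lia.
Qed.

Lemma inPi0 (A : {fset 'X_{1..s}}) : inPi A (0 : {mpoly F[s]}).
Proof. by move=> m; rewrite msupp0. Qed.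

Lemma inPiD (A : {fset 'X_{1..s}}) p q : inPi A p -> inPi A q -> inPi A (p + q).
Proof. by move=> hp hq m /msuppD_le; rewrite mem_cat => /orP[/hp|/hq]. Qed.

Lemma inPiB (A : {fset 'X_{1..s}}) p q : inPi A p -> inPi A q -> inPi A (p - q).
Proof. by move=> hp hq m /msuppB_le; rewrite mem_cat => /orP[/hp|/hq]. Qed.

Lemma inPiZ (A : {fset 'X_{1..s}}) c p : inPi A p -> inPi A (c *: p).
Proof. by move=> hp m /msuppZ_le /hp. Qed.

Lemma inPiX (A : {fset 'X_{1..s}}) m : m \in A -> inPi A ('X_[m] : {mpoly F[s]}).
Proof. by move=> mA k; rewrite msuppX inE => /eqP ->. Qed.

Lemma inPi_sum (A : {fset 'X_{1..s}}) (I : Type) (r : seq I) (P : pred I) (G : I -> {mpoly F[s]}) :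
  (forall i, P i -> inPi A (G i)) -> inPi A (\sum_(i <- r | P i) G i).
Proof. by move=> hG; apply: big_ind => //; [apply: inPi0| apply: inPiD]. Qed.

Lemma deg_msize p q : (deg p <= deg q) = (msize p <= msize q)%N.
Proof. rewrite /deg; apply/idP/idP; lia. Qed.

End H.

Section Main.
Context (F : idomainType) (s : nat) (X : seq 'rV[F]_s)
  (A : {fset 'X_{1..s}}) (L : {mpoly F[s]} -> {mpoly F[s]}).
Hypothesis Xn : X != [::].
Hypothesis dr : deg_red_interp_space A X.
Hypothesis HL : forall p, inPi A (L p) /\ (forall x, x \in X -> evalpt (L p) x = evalpt p x).

Lemma main_gen : is_Hbasis (vanishing_ideal X)
    [seq ('X_[alpha] - L 'X_[alpha]) | alpha <- enum_fset (border A)].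
Proof.
set q := fun alpha : 'X_{1..s} => 'X_[alpha] - L 'X_[alpha].
set H := [seq _ | alpha <- _].
have uniq0 r : inPi A r -> (forall x, x \in X -> evalpt r x = 0) -> r = 0.
  move=> Pr Er; have [p [_ _ U _]] := dr 0.
  have ev0 x : evalpt (0 : {mpoly F[s]}) x = 0 by rewrite /evalpt; apply: meval0.
  rewrite (U r Pr); last by move=> x xX; rewrite (Er x xX) ev0.
  by apply/esym/U => //; apply: inPi0.
have Ldeg p : (msize (L p) <= msize p)%N.
  have [p0 [P0 E0 U0 D0]] := dr p; have [HL1 HL2] := HL p.
  by rewrite (U0 _ HL1 HL2) -deg_msize.
have A0 : 0%MM \in A.
  have [p0 [P0 E0 U0 D0]] := dr 1.
  move: D0; rewrite deg_msize msize1 => D0.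
  have p0C := msize1_polyC D0; rewrite p0C in E0.
  have [x xX] : exists x, x \in X by clear -Xn; case: X Xn => // x X' _; exists x; rewrite mem_head.
  move: (E0 x xX); rewrite /evalpt !mevalC => e.
  by apply: P0; rewrite mcoeff_msupp e oner_eq0.
have evB p r x : evalpt (p - r) x = evalpt p x - evalpt r x by rewrite /evalpt mevalB.
have qvan a x : x \in X -> evalpt (q a) x = 0.
  by move=> xX; rewrite /q evB (proj2 (HL _)) // subrr.
have Hvan h : h \in H -> vanishing_ideal X h.
  by case/mapP => a _ -> x xX; apply: qvan.
have Snvan n p : Sn H n p -> vanishing_ideal X p.
  move=> [g [-> _]] x xX; rewrite /evalpt raddf_sum /= big1_seq // => h /andP[_ hh].
  rewrite mevalM; have := Hvan h; rewrite -mem_undup => /(_ hh x xX); rewrite /evalpt => ->; by rewrite mulr0.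
have replace n P Q : vanishing_ideal X P -> Sn H n Q -> inPi A (P - Q) -> Sn H n P.
  move=> vP sQ hPQ; have e : P - Q = 0.
    by apply: uniq0 => // x xX; rewrite evB vP // (Snvan _ _ sQ) // subr0.
  by move/eqP: e; rewrite subr_eq0 => /eqP ->.
have inH a : a \in border A -> q a \in H by move=> ha; apply: map_f.
have degq a : deg (q a) <= (mdeg a)%:Z.
  have : (msize (q a) <= msize ('X_[a] : {mpoly F[s]}))%N.
    apply: leq_trans (msizeD_le' _ _) _; rewrite geq_max msizeN Ldeg andbT //.
  rewrite msizeX /deg; lia.
have inB d j : d \in A -> (d + U_(j))%MM \notin A -> (d + U_(j))%MM \in border A.
  move=> dA dn; rewrite /border in_fsetD dn /=; apply/imfset2P; exists d => //; exists j => //.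
have key k b : (mdeg b < k)%N -> b \notin A -> Sn H (mdeg b)%:Z (q b).
  elim: k b => // k IH b hb bA.
  case: (boolP (b \in border A)) => bB; first by apply: Sn_base; [apply: inH | apply: degq].
  have [j bj] : exists j, (0 < b j)%N.
    case: (boolP [exists j, (0 < b j)%N]) => [/existsP//|/existsPn nb].
    exfalso; move: bA; suff -> : b = 0%MM by rewrite A0.
    by apply/mnmP => i; rewrite mnm0E; move: (nb i); lia.
  pose c := [multinom (b i - (j == i))%N | i < s].
  have hbc : b = (c + U_(j))%MM.
    apply/mnmP => i; rewrite mnmDE mnmE mnm1E.
    by case: (j =P i) => [<-|_] /=; lia.
  have mdb : mdeg b = (mdeg c).+1 by rewrite hbc mdegD mdeg1 addn1.
  have cA : c \notin A.
    by apply/negP => cA; move: bB; rewrite hbc inB // -hbc.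
  have IHc := IH c (ltac:(lia)) cA.
  set Lc := L 'X_[c].
  set T := \sum_(d <- msupp Lc) Lc@_d *: (if (d + U_(j))%MM \in A then 0 else q (d + U_(j))%MM).
  set E := \sum_(d <- msupp Lc) Lc@_d *: (if (d + U_(j))%MM \in A then 'X_[(d + U_(j))%MM] else L 'X_[(d + U_(j))%MM]).
  have degd d : d \in msupp Lc -> (mdeg d <= mdeg c)%N.
    by move/msize_mdeg_lt; have := Ldeg 'X_[c]; rewrite msizeX -/Lc; lia.
  have dA d : d \in msupp Lc -> d \in A := (proj1 (HL _)) d.
  have ST : Sn H (mdeg b) T.
    rewrite /T big_seq; apply: Snsum => d dL; apply: SnZ; case: ifP => dU; first exact: Sn0.
    apply: Sn_base; first by apply: inH; apply: inB => //; [apply: dA | rewrite dU].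
    have := degq (d + U_(j))%MM; rewrite mdegD mdeg1 mdb; have := degd d dL; lia.
  have SQ : Sn H (mdeg b) ('X_[U_(j)] * q c + T).
    apply: SnD => //.
    have hX : deg ('X_[U_(j)] : {mpoly F[s]}) <= 1 by rewrite /deg msizeX mdeg1; lia.
    apply: Sn_le (@SnM _ _ H _ 1 _ _ hX IHc); rewrite mdb; lia.
  have e1 : 'X_[U_(j)] * 'X_[c] = 'X_[b] :> {mpoly F[s]} by rewrite hbc mpolyXD mulrC.
  have e2 : 'X_[U_(j)] * Lc = T + E.
    rewrite {1}(mpolyE Lc) mulr_sumr /T /E -big_split /=; apply: eq_bigr => d _.
    rewrite -scalerAr -scalerDr mulrC -mpolyXD; congr (_ *: _).
    by case: ifP => _; rewrite /q ?add0r // subrK.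
  apply: (replace _ _ ('X_[U_(j)] * q c + T)) => //; first by move=> x xX; apply: qvan.
  have -> : q b - ('X_[U_(j)] * q c + T) = E - L 'X_[b].
    rewrite /q mulrBr e1 -/Lc e2.
    have gen (a l t e : {mpoly F[s]}) : a - l - (a - (t + e) + t) = e - l by ring.
    exact: gen.
  apply: inPiB; last exact: (proj1 (HL _)).
  rewrite /E; apply: inPi_sum => d _; apply: inPiZ; case: ifP => dU; first by apply: inPiX; rewrite dU.
  exact: (proj1 (HL _)).
split; first exact: Hvan.
move=> p vp; suff : Sn H (deg p) p by [].
set Q := \sum_(m <- msupp p) p@_m *: (if m \in A then 0 else q m).
apply: (replace _ _ Q) => //.
  rewrite /Q big_seq; apply: Snsum => m mp; apply: SnZ; case: ifP => mA; first exact: Sn0.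
  apply: Sn_le (key _ m (ltnSn _) (negbT mA)).
  by rewrite /deg; have := msize_mdeg_lt mp; lia.
rewrite {1}(mpolyE p) /Q -sumrB; apply: inPi_sum => m _; rewrite -scalerBr; apply: inPiZ.
case: ifP => mA; first by rewrite subr0; exact: inPiX.
by rewrite /q opprB addrC subrK; exact: (proj1 (HL _)).
Qed.

End Main.

Theorem lemma36 (R : realType) (s : nat) (X : seq 'rV[R[i]]_s)
  (A : {fset 'X_{1..s}}) (L : {mpoly R[i][s]} -> {mpoly R[i][s]}) :
  X != [::] ->
  deg_red_interp_space A X ->
  (forall p, inPi A (L p) /\ (forall x, x \in X -> evalpt (L p) x = evalpt p x)) ->
  is_Hbasis (vanishing_ideal X)
    [seq ('X_[alpha] - L 'X_[alpha]) | alpha <- enum_fset (border A)].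
Proof.
move=> Xn dr HL.
Time exact: (@main_gen R[i] s X A L Xn dr HL).
Qed.
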